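(* Every $2$-uniform projective Hjelmslev plane is isomorphic to an incidence structure produced by the Construction (Algorithm 1) described in the context, for a suitable integer $m\ge 2$, projective plane $\mathcal{P}$ of order $m$, affine planes $\mathcal{A}_P$, orthogonal arrays $\mathcal{O}_l$, and admissible choices $\pi,\beta$.
   Context: An orthogonal array $OA(2,k,v)$ is a $v^2\times k$ array with entries from a $v$-element symbol set such that in any two columns every ordered pair of symbols occurs in exactly one row. A projective plane of order $m$ has $m+1$ points on each line and $m+1$ lines through each point; an affine plane of order $m$ has $m^2$ points, $m$ points per line, and its lines split into $m+1$ parallel classes, each consisting of $m$ pairwise disjoint lines covering all points. Construction (Algorithm 1). Let $\mathcal{P}$ be a projective plane of order $m$. For each point $P$ of $\mathcal{P}$ let $\mathcal{A}_P$ be an affine plane of order $m$ (not necessarily all the same). For each line $l$ of $\mathcal{P}$ let $\mathcal{O}_l$ be an $OA(2,m+1,m)$ on a symbol set $\Sigma_l$ whose $m+1$ columns are labelled bijectively by the $m+1$ points of $l$. For each incident pair $P\in l$ choose a parallel class $\pi(P,l)$ of $\mathcal{A}_P$ such that, for each fixed $P$, the map $l\mapsto\pi(P,l)$ is a bijection from the $m+1$ lines of $\mathcal{P}$ through $P$ to the $m+1$ parallel classes of $\mathcal{A}_P$; and choose a bijection $\beta_{P,l}$ from $\Sigma_l$ to the $m$ lines of $\pi(P,l)$. The points of the constructed structure are the pairs $(P,x)$ with $P$ a point of $\mathcal{P}$ and $x$ a point of $\mathcal{A}_P$. For each line $l$ of $\mathcal{P}$ and each row $r$ of $\mathcal{O}_l$,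 there is the line $\bigcup_{P\in l}\{(P,x): x\in \beta_{P,l}(\mathcal{O}_l(r,P))\}$, where $\mathcal{O}_l(r,P)$ is the entry in row $r$ and the column labelled $P$. Incidence is membership. Projective Hjelmslev plane: an incidence structure $\mathcal{H}$ such that (1) any two points are incident with at least one line; (2) any two lines meet in at least one point; (3) two lines meeting in more than one point are called neighbours; (4) two points incident with more than one common line are called neighbours; (5) there is an incidence-preserving surjection $\phi$ from $\mathcal{H}$ onto an ordinary projective plane with $\phi(P)=\phi(Q)\iff P\sim Q$ for points and $\phi(g)=\phi(h)\iff g\sim h$ for lines (where $\sim$ is the neighbour relation, reflexively extended). Affine Hjelmslev plane: an incidence structure such that any two points are incident with at least one line, lines meeting in more than one point are neighbours, and there is an incidence-preserving surjection $\phi$ onto an ordinary affine plane with $\phi(P)=\phi(Q)\iff P\sim Q$, $\phi(g)=\phi(h)\iff g\sim h$, and lines with no common point mapped to parallel lines. Uniformity: a $1$-uniform projective (resp. affine) Hjelmslev plane is an ordinary projective (resp. affine) plane. For a point $P$, the point-neighbourhood restriction $\bar P$ is the incidence structure whose points are the points $Q\sim P$ and whose lines are the nonempty sets $g\cap\bar P$ for lines $g$ of $\mathcal{H}$. A projective (resp. affine) Hjelmslev plane is $n$-uniform if for every point $P$, $\bar P$ is an $(n-1)$-uniform affine Hjelmslev plane, and every line of $\bar P$ is the restriction of the same number of lines of $\mathcal{H}$. *)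

(* Defs.v *)
From mathcomp Require Import all_boot.
Set Implicit Arguments. Unset Strict Implicit. Unset Printing Implicit Defensive.

Definition nbP {Pt Ln : finType} (I : Pt -> Ln -> bool) (p q : Pt) : bool :=
  (p == q) || (1 < #|[set g | I p g && I q g]|).
Definition nbL {Pt Ln : finType} (I : Pt -> Ln -> bool) (g h : Ln) : bool :=
  (g == h) || (1 < #|[set p | I p g && I p h]|).

Definition proj_plane {Pt Ln : finType} (I : Pt -> Ln -> bool) : Prop :=
  (forall p q : Pt, p != q -> exists! g, I p g && I q g) /\
  (forall g h : Ln, g != h -> exists! p, I p g && I p h) /\
  (exists a b c d : Pt, uniq [:: a; b; c; d] /\
     ~~ [exists g, [&& I a g, I b g & I c g]] /\
     ~~ [exists g, [&& I a g, I b g & I d g]] /\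
     ~~ [exists g, [&& I a g, I c g & I d g]] /\
     ~~ [exists g, [&& I b g, I c g & I d g]]).

Definition proj_plane_order {Pt Ln : finType} (I : Pt -> Ln -> bool) (m : nat) : Prop :=
  proj_plane I /\
  (forall g : Ln, #|[set p | I p g]| = m.+1) /\
  (forall p : Pt, #|[set g | I p g]| = m.+1).

Definition affine_plane {Pt Ln : finType} (I : Pt -> Ln -> bool) : Prop :=
  (forall p q : Pt, p != q -> exists! g, I p g && I q g) /\
  (forall (p : Pt) (g : Ln), ~~ I p g ->
     exists! h, I p h && [forall q, ~~ (I q g && I q h)]) /\
  (exists a b c : Pt, uniq [:: a; b; c] /\ ~~ [exists g, [&& I a g, I b g & I c g]]).

Definition parallel {Pt Ln : finType} (I : Pt -> Ln -> bool) (g h : Ln) : bool :=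
  (g == h) || [forall q, ~~ (I q g && I q h)].
Definition par_class {Pt Ln : finType} (I : Pt -> Ln -> bool) (g : Ln) : {set Ln} :=
  [set h | parallel I g h].
Definition par_classes {Pt Ln : finType} (I : Pt -> Ln -> bool) : {set {set Ln}} :=
  [set par_class I g | g : Ln].

Definition affine_plane_order {Pt Ln : finType} (I : Pt -> Ln -> bool) (m : nat) : Prop :=
  affine_plane I /\ #|Pt| = m ^ 2 /\ (forall g : Ln, #|[set p | I p g]| = m) /\
  #|par_classes I| = m.+1.

Definition proj_hjelmslev {Pt Ln : finType} (I : Pt -> Ln -> bool) : Prop :=
  (forall p q : Pt, exists g, I p g && I q g) /\
  (forall g h : Ln, exists p, I p g && I p h) /\
  exists (Qpt Qln : finType) (QI : Qpt -> Qln -> bool)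
         (phiP : Pt -> Qpt) (phiL : Ln -> Qln),
    proj_plane QI /\
    (forall y, exists x, phiP x = y) /\ (forall y, exists x, phiL x = y) /\
    (forall p g, I p g -> QI (phiP p) (phiL g)) /\
    (forall p q, phiP p = phiP q <-> nbP I p q) /\
    (forall g h, phiL g = phiL h <-> nbL I g h).

Definition restr {Pt Ln : finType} (I : Pt -> Ln -> bool) (P : Pt) (g : Ln) : {set Pt} :=
  [set q | I q g && nbP I q P].
Definition restr_lines {Pt Ln : finType} (I : Pt -> Ln -> bool) (P : Pt) : {set {set Pt}} :=
  [set S : {set Pt} | (S != set0) && [exists g, S == restr I P g]].
Definition restr_inc {Pt Ln : finType} (I : Pt -> Ln -> bool) (P : Pt)
  (q : {q : Pt | nbP I q P}) (S : {S : {set Pt} | S \in restr_lines I P}) : bool :=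
  val q \in val S.

(* 2-uniform projective Hjelmslev plane: each \bar P is a 1-uniform affine
   Hjelmslev plane (= ordinary affine plane) and every line of \bar P is the
   restriction of the same number of lines. *)
Definition two_uniform_PH {Pt Ln : finType} (I : Pt -> Ln -> bool) : Prop :=
  proj_hjelmslev I /\
  forall P : Pt,
    affine_plane (@restr_inc Pt Ln I P) /\
    exists c : nat, forall S, S \in restr_lines I P ->
      #|[set g | restr I P g == S]| = c.

Definition inc_iso {Pt Ln Pt' Ln' : finType} (I : Pt -> Ln -> bool)
  (I' : Pt' -> Ln' -> bool) : Prop :=
  exists (f : Pt -> Pt') (g : Ln -> Ln'),
    bijective f /\ bijective g /\ forall p l, I' (f p) (g l) = I p l.

(* OA(2, m+1, m) attached to line l: symbols Sym, rows Row, entry O r P in the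
   column labelled by the point P of l. *)
Definition OA_on {Ppt Pln : finType} (PI : Ppt -> Pln -> bool) (m : nat) (l : Pln)
  {Sym Row : finType} (O : Row -> Ppt -> Sym) : Prop :=
  #|Sym| = m /\
  forall P Q : Ppt, PI P l -> PI Q l -> P != Q -> bijective (fun r => (O r P, O r Q)).

Definition admissible_pi {Ppt Pln : finType} (PI : Ppt -> Pln -> bool)
  {APt ALn : Ppt -> finType} (AI : forall P, APt P -> ALn P -> bool)
  (pi : forall P : Ppt, Pln -> {set ALn P}) : Prop :=
  forall P : Ppt,
    (forall l, PI P l -> pi P l \in par_classes (AI P)) /\
    (forall l l', PI P l -> PI P l' -> pi P l = pi P l' -> l = l') /\
    (forall C, C \in par_classes (AI P) -> exists l, PI P l /\ pi P l = C).

Definition admissible_beta {Ppt Pln : finType} (PI : Ppt -> Pln -> bool)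
  {ALn : Ppt -> finType} {Sym : Pln -> finType}
  (pi : forall P : Ppt, Pln -> {set ALn P})
  (beta : forall (P : Ppt) (l : Pln), Sym l -> ALn P) : Prop :=
  forall P l, PI P l ->
    (forall s, beta P l s \in pi P l) /\ injective (beta P l) /\
    (forall h, h \in pi P l -> exists s, beta P l s = h).

Definition construction_inc {Ppt Pln : finType} (PI : Ppt -> Pln -> bool)
  {APt ALn : Ppt -> finType} (AI : forall P, APt P -> ALn P -> bool)
  {Sym Row : Pln -> finType} (O : forall l, Row l -> Ppt -> Sym l)
  (beta : forall (P : Ppt) (l : Pln), Sym l -> ALn P)
  (x : {P : Ppt & APt P}) (y : {l : Pln & Row l}) : bool :=
  PI (tag x) (tag y) &&
  AI (tag x) (tagged x) (beta (tag x) (tag y) (O (tag y) (tagged y) (tag x))).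

(* Main.v *)
Require Import Defs.
From mathcomp Require Import all_boot zify.
Set Implicit Arguments. Unset Strict Implicit. Unset Printing Implicit Defensive.

Lemma card_rel_le (A B : finType) (SA : {set A}) (SB : {set B}) (R : A -> B -> bool) :
 (forall a, a \in SA -> exists b, (b \in SB) && R a b) ->
 (forall a a' b, a \in SA -> a' \in SA -> b \in SB -> R a b -> R a' b -> a = a') ->
 #|SA| <= #|SB|.
Proof.
move=> Hex Hinj.
case: (set_0Vmem SA) => [->|[a0 Ha0]]; first by rewrite cards0.
have [b0 _] := Hex a0 Ha0.
pose f a := odflt b0 [pick b in SB | R a b].
have fP a : a \in SA -> (f a \in SB) && R a (f a).
  move=> Ha; rewrite /f; case: pickP => [b /andP[-> ->]|H] //=.
  by have [b /andP[Hb Hr]] := Hex a Ha; move: (H b); rewrite Hb Hr.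
have finj : {in SA &, injective f}.
  move=> a a' Ha Ha' E; have /andP[Hb Hr] := fP a Ha; have /andP[_ Hr'] := fP a' Ha'.
  by apply: (Hinj a a' (f a)) => //; rewrite E.
rewrite -(card_in_imset finj); apply: subset_leq_card; apply/subsetP => _ /imsetP[a Ha ->].
by have /andP[] := fP a Ha.
Qed.

Lemma card_rel (A B : finType) (SA : {set A}) (SB : {set B}) (R : A -> B -> bool) :
 (forall a, a \in SA -> exists b, (b \in SB) && R a b) ->
 (forall b, b \in SB -> exists a, (a \in SA) && R a b) ->
 (forall a b b', a \in SA -> b \in SB -> b' \in SB -> R a b -> R a b' -> b = b') ->
 (forall a a' b, a \in SA -> a' \in SA -> b \in SB -> R a b -> R a' b -> a = a') ->
 #|SA| = #|SB|.
Proof.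
move=> H1 H2 H3 H4; apply/eqP; rewrite eqn_leq (card_rel_le H1 H4) /=.
by apply: (card_rel_le (R := fun b a => R a b)) => // b b' a Hb Hb' Ha; apply: H3.
Qed.

Section Affine.
Variables (X Y : finType) (J : X -> Y -> bool).
Hypothesis HA : affine_plane J.

Lemma aff_join p q : p != q -> exists S, J p S && J q S.
Proof. by move=> H; case: (HA.1 p q H) => S [HS _]; exists S. Qed.

Lemma aff_uniq p q S T : p != q -> J p S -> J q S -> J p T -> J q T -> S = T.
Proof.
move=> H a b c d; case: (HA.1 p q H) => U [_ HU].
by rewrite -(HU S) ?a ?b // (HU T) ?c ?d.
Qed.

Definition disj (S T : Y) := [forall q, ~~ (J q S && J q T)].

Lemma aff_par u S : ~~ J u S -> exists T, J u T && disj S T.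
Proof. by move=> H; case: (HA.2.1 u S H) => T [HT _]; exists T. Qed.

Lemma aff_par_uniq u S T T' : ~~ J u S -> J u T -> J u T' -> disj S T -> disj S T' -> T = T'.
Proof.
move=> H a b c d; case: (HA.2.1 u S H) => U [_ HU].
by rewrite -(HU T) ?a ?c // (HU T') ?b ?d.
Qed.

Lemma disjP S T q : disj S T -> J q S -> J q T -> False.
Proof. by move=> /forallP/(_ q); rewrite negb_and => /orP[]/negP. Qed.

Lemma aff_off S : exists u, ~~ J u S.
Proof.
case: HA => _ [_ [a [b [c [_ Hn]]]]].
case Ha: (J a S); last by exists a; rewrite Ha.
case Hb: (J b S); last by exists b; rewrite Hb.
case Hc: (J c S); last by exists c; rewrite Hc.
by case/negP: Hn; apply/existsP; exists S; rewrite Ha Hb Hc.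
Qed.

Definition coll x y z := [exists T, [&& J x T, J y T & J z T]].

Lemma aff_tri q : exists u w, [/\ u != q, w != q, u != w & ~~ coll q u w].
Proof.
case: HA => _ [_ [a [b [c [Hu Hn]]]]].
move: Hu; rewrite /= !inE !negb_or => /andP[/andP[ab ac] /andP[bc _]].
have perm x y z : coll x y z -> coll y x z /\ coll x z y.
  by move=> /existsP[T /and3P[h1 h2 h3]]; split; apply/existsP; exists T; apply/and3P.
have Hn' : ~~ coll a b c by [].
case: (eqVneq q a) => [->|qa].
  by exists b, c; split => //; rewrite eq_sym.
case: (eqVneq q b) => [->|qb].
  exists a, c; split => //; try by rewrite eq_sym.
  by apply: contra Hn' => /perm[H _].
case: (eqVneq q c) => [->|qc].
  exists a, b; split => //; try by rewrite eq_sym.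
  by apply: contra Hn' => /perm[/perm[_ H] _].
case Hab: (coll q a b); last first.
  by exists a, b; split => //; rewrite ?Hab // eq_sym.
case Hac: (coll q a c); last first.
  by exists a, c; split => //; rewrite ?Hac // eq_sym.
case/negP: Hn'.
move: Hab Hac => /existsP[T /and3P[h1 h2 h3]] /existsP[T' /and3P[h1' h2' h3']].
have E := aff_uniq qa h1 h2 h1' h2'; subst T'.
by apply/existsP; exists T; rewrite h2 h3 h3'.
Qed.

Lemma aff_two S q : J q S -> exists q', (q' != q) && J q' S.
Proof.
move=> HqS; case: (boolP [exists q', (q' != q) && J q' S]) => [/existsP//|/existsPn Hno]; exfalso.
have onlyq z : J z S -> z = q.
  by move=> Hz; move: (Hno z); rewrite Hz andbT negbK => /eqP.
have [u [w [uq wq uw Hc]]] := aff_tri q.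
have qw : q != w by rewrite eq_sym.
have [N /andP[qN wN]] := aff_join qw.
have uN : ~~ J u N.
  by apply: contra Hc => uN; apply/existsP; exists N; rewrite qN uN wN.
have [N' /andP[uN' dN']] := aff_par uN.
have [M /andP[uM wM]] := aff_join uw.
have uS : ~~ J u S by apply/negP => /onlyq /eqP; rewrite (negPf uq).
have dS T : ~~ J q T -> disj S T.
  move=> Hq; apply/forallP => z; apply/negP => /andP[/onlyq -> ]; exact/negP.
have qM : ~~ J q M.
  by apply: contra Hc => qM; apply/existsP; exists M; rewrite qM uM wM.
have qN' : ~~ J q N' by apply/negP => qN'; exact: (disjP dN' qN qN').
have E := aff_par_uniq uS uM uN' (dS _ qM) (dS _ qN'); subst N'.
exact: (disjP dN' wN wM).
Qed.

Lemma aff_size u S : ~~ J u S -> #|[set q | J q S]|.+1 = #|[set T | J u T]|.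
Proof.
move=> uS; have [P /andP[uP dP]] := aff_par uS.
rewrite (cardsD1 P [set T | J u T]) inE uP add1n; congr _.+1.
apply: (card_rel (R := fun z T => J z T)).
- move=> z; rewrite inE => zS.
  have uz : u != z by apply: contra uS => /eqP ->.
  have [T /andP[uT zT]] := aff_join uz; exists T.
  rewrite !inE uT zT andbT andbT; apply/negP => /eqP E; subst T.
  exact: (disjP dP zS zT).
- move=> T; rewrite !inE => /andP[TP uT].
  case: (boolP [exists z, (z \in [set q | J q S]) && J z T]) => [/existsP//|/existsPn Hno]; exfalso.
  have dT : disj S T.
    by apply/forallP => z; move: (Hno z); rewrite inE.
  by move/eqP: TP; apply; apply: (aff_par_uniq uS uT uP dT dP).
- move=> z T T'; rewrite !inE => zS /andP[_ uT] /andP[_ uT'] zT zT'.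
  have uz : u != z by apply: contra uS => /eqP ->.
  exact: (aff_uniq uz uT zT uT' zT').
- move=> z z' T; rewrite !inE => zS z'S /andP[_ uT] zT z'T.
  apply/eqP/negPn/negP => zz.
  have E := aff_uniq zz zS z'S zT z'T; subst T.
  by rewrite uT in uS.
Qed.

End Affine.

Section PH.
Variables (Pt Ln Qpt Qln : finType) (I : Pt -> Ln -> bool) (QI : Qpt -> Qln -> bool)
  (phiP : Pt -> Qpt) (phiL : Ln -> Qln).
Hypothesis Hjoin : forall p q, exists g, I p g && I q g.
Hypothesis Hmeet : forall g h, exists p, I p g && I p h.
Hypothesis HQ : proj_plane QI.
Hypothesis HsP : forall y, exists x, phiP x = y.
Hypothesis HsL : forall y, exists x, phiL x = y.
Hypothesis Hinc : forall p g, I p g -> QI (phiP p) (phiL g).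
Hypothesis HnP : forall p q, phiP p = phiP q <-> nbP I p q.
Hypothesis HnL : forall g h, phiL g = phiL h <-> nbL I g h.
Hypothesis Haff : forall P, affine_plane (@restr_inc Pt Ln I P).

Lemma Qjoin P R : P != R -> exists k, QI P k && QI R k.
Proof. by move=> H; case: (HQ.1 P R H) => k [Hk _]; exists k. Qed.

Lemma Quniq P R k k' : P != R -> QI P k -> QI R k -> QI P k' -> QI R k' -> k = k'.
Proof.
move=> H a b c d; case: (HQ.1 P R H) => U [_ HU].
by rewrite -(HU k) ?a ?b // (HU k') ?c ?d.
Qed.

Lemma Qmeet k k' : k != k' -> exists P, QI P k && QI P k'.
Proof. by move=> H; case: (HQ.2.1 k k' H) => P [HP _]; exists P. Qed.

Lemma Qoff l : exists R, ~~ QI R l.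
Proof.
case: HQ => _ [_ [a [b [c [d [_ [Hn _]]]]]]].
case Ha: (QI a l); last by exists a; rewrite Ha.
case Hb: (QI b l); last by exists b; rewrite Hb.
case Hc: (QI c l); last by exists c; rewrite Hc.
by case/negP: Hn; apply/existsP; exists l; rewrite Ha Hb Hc.
Qed.

Lemma Qline2 P l : QI P l -> exists k, (k != l) && QI P k.
Proof.
move=> Pl; have [R Rl] := Qoff l.
have PR : P != R by apply: contra Rl => /eqP <-.
have [k /andP[Pk Rk]] := Qjoin PR; exists k; rewrite Pk andbT.
by apply: contra Rl => /eqP <-.
Qed.

Lemma Qsecond P l : QI P l -> exists Q, (Q != P) && QI Q l.
Proof.
move=> Pl; have [R Rl] := Qoff l.
have PR : P != R by apply: contra Rl => /eqP <-.
have [k0 /andP[Pk0 Rk0]] := Qjoin PR.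
have [U Uk0] := Qoff k0.
have RU : R != U by apply: contra Uk0 => /eqP <-.
have [k /andP[Rk Uk]] := Qjoin RU.
have kl : k != l by apply: contra Rl => /eqP <-.
have [Q /andP[Qk Ql]] := Qmeet kl.
exists Q; rewrite Ql andbT; apply/negP => /eqP E; subst Q.
have E := Quniq PR Pk0 Rk0 Qk Rk; subst k.
by rewrite Uk in Uk0.
Qed.

Definition dg P := #|[set k | QI P k]|.

Lemma QsizeA R l : ~~ QI R l -> #|[set P | QI P l]| = dg R.
Proof.
move=> Rl; apply: (card_rel (R := fun P k => QI P k && QI R k)).
- move=> P; rewrite inE => Pl.
  have PR : P != R by apply: contra Rl => /eqP <-.
  have [k /andP[Pk Rk]] := Qjoin PR; exists k; by rewrite inE Pk Rk.
- move=> k; rewrite inE => Rk.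
  have kl : k != l by apply: contra Rl => /eqP <-.
  have [P /andP[Pk Pl]] := Qmeet kl; exists P; by rewrite inE Pl Pk Rk.
- move=> P k k'; rewrite !inE => Pl _ _ /andP[Pk Rk] /andP[Pk' Rk'].
  have PR : P != R by apply: contra Rl => /eqP <-.
  exact: (Quniq PR Pk Rk Pk' Rk').
- move=> P P' k; rewrite !inE => Pl P'l Rk /andP[Pk _] /andP[P'k _].
  case: (eqVneq P P') => // PP; exfalso.
  have E := Quniq PP Pk P'k Pl P'l; subst k.
  by rewrite Rk in Rl.
Qed.

Lemma nbE p q : nbP I p q = (phiP p == phiP q).
Proof. by apply/idP/eqP => /HnP. Qed.

Lemma L2 p q g h : phiP p != phiP q -> I p g -> I q g -> I p h -> I q h -> g = h.
Proof.
move=> pq pg qg ph qh; case: (eqVneq g h) => // gh; exfalso.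
have : nbP I p q.
  rewrite /nbP; apply/orP; right; apply/card_gt1P; exists g, h.
  by rewrite !inE pg qg ph qh.
by rewrite nbE (negPf pq).
Qed.

Lemma nbL_phi p q g h : p != q -> I p g -> I q g -> I p h -> I q h -> phiL g = phiL h.
Proof.
move=> pq pg qg ph qh; apply/HnL; rewrite /nbL; apply/orP; right.
apply/card_gt1P; exists p, q; by rewrite !inE pg qg ph qh.
Qed.

Lemma L4 h P : QI P (phiL h) -> exists p, I p h && (phiP p == P).
Proof.
move=> Ph; have [k /andP[kh Pk]] := Qline2 Ph.
have [h' Eh'] := HsL k.
have [p /andP[ph ph']] := Hmeet h h'; exists p; rewrite ph /=.
have := Hinc ph; have := Hinc ph'; rewrite Eh' => a b.
case: (eqVneq (phiP p) P) => // pP; exfalso.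
by move/eqP: kh; apply; apply: (Quniq pP a Pk b Ph).
Qed.

Lemma exP P : exists x, phiP x == P.
Proof. by have [x <-] := HsP P; exists x. Qed.
Definition rep P := xchoose (exP P).
Lemma repE P : phiP (rep P) = P.
Proof. exact/eqP/(xchooseP (exP P)). Qed.

Local Notation XX P := {q : Pt | nbP I q (rep P)}.
Local Notation YY P := {S : {set Pt} | S \in restr_lines I (rep P)}.
Local Notation J P := (@restr_inc Pt Ln I (rep P)).
Local Notation rs P g := (restr I (rep P) g).

Lemma inX P q : nbP I q (rep P) = (phiP q == P).
Proof. by rewrite nbE repE. Qed.

Lemma inXP P q : phiP q == P -> nbP I q (rep P).
Proof. by rewrite inX. Qed.

Definition mkX P q (h : phiP q == P) : XX P := exist _ q (inXP h).

Lemma valX P (q : XX P) : phiP (val q) = P.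
Proof. by apply/eqP; rewrite -inX (valP q). Qed.

Lemma restr_in P g q : I q g -> phiP q == P -> rs P g \in restr_lines I (rep P).
Proof.
move=> qg qP; rewrite inE; apply/andP; split.
  by apply/set0Pn; exists q; rewrite inE qg inXP.
by apply/existsP; exists g.
Qed.

Definition mkY P g q (qg : I q g) (qP : phiP q == P) : YY P := exist _ (rs P g) (restr_in qg qP).

Definition pi P l : {set YY P} :=
  [set S : YY P | [exists g, (phiL g == l) && (val S == rs P g)]].

Lemma piP P l (S : YY P) : S \in pi P l -> exists g, phiL g = l /\ val S = rs P g.
Proof. by rewrite inE => /existsP[g /andP[/eqP a /eqP b]]; exists g. Qed.

Lemma Jrs P (q : XX P) g : (val q \in rs P g) = I (val q) g.
Proof. by rewrite inE (valP q) andbT. Qed.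

Lemma rsP P g q : (q \in rs P g) = I q g && (phiP q == P).
Proof. by rewrite inE inX. Qed.

Lemma F1 P l (q : XX P) : QI P l -> exists S : YY P, (S \in pi P l) && J P q S.
Proof.
move=> Pl; have [Q /andP[QP Ql]] := Qsecond Pl.
have [y yQ] := HsP Q.
have [g /andP[qg yg]] := Hjoin (val q) y.
have qP : phiP (val q) == P by rewrite valX.
have gl : phiL g = l.
  have a := Hinc qg; have b := Hinc yg; rewrite valX in a; rewrite yQ in b.
  by apply: (Quniq (P:=P) (R:=Q)) => //; rewrite eq_sym.
exists (mkY qg qP); rewrite /restr_inc /= Jrs qg andbT inE.
by apply/existsP; exists g; rewrite gl !eqxx.
Qed.

Lemma F1u P l (q : XX P) S S' : S \in pi P l -> S' \in pi P l -> J P q S -> J P q S' -> S = S'.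
Proof.
move=> /piP[g [gl ES]] /piP[g' [g'l ES']]; rewrite /restr_inc ES ES' !Jrs => qg qg'.
case: (eqVneq g g') => [E|gg']; first by apply: val_inj; rewrite ES ES' E.
have : nbL I g g' by apply/HnL; rewrite gl g'l.
rewrite /nbL (negPf gg') /= => /card_gt1P[z1 [z2 [h1 h2 z12]]].
have [z [zq zg zg']] : exists z, [/\ z != val q, I z g & I z g'].
  move: h1 h2; rewrite !inE => /andP[a b] /andP[c d].
  case: (eqVneq z1 (val q)) => [E|ne]; last by exists z1.
  by exists z2; split=> //; rewrite -E eq_sym.
case: (eqVneq (phiP z) P) => [zP|zP].
  pose zz := mkX (introT eqP zP).
  have nq : zz != q by apply: contra zq => /eqP <-.
  apply: (aff_uniq (Haff (rep P)) nq); rewrite /restr_inc /= ?ES ?ES' ?Jrs //.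
  - by rewrite inE zg inXP // zP.
  - by rewrite inE zg' inXP // zP.
by case/eqP: gg'; apply: (L2 (p:=z) (q:=val q)) => //; rewrite valX.
Qed.

Lemma F2 P l S : QI P l -> S \in pi P l -> par_class (J P) S = pi P l.
Proof.
move=> Pl HS; apply/setP => T; rewrite /par_class inE /parallel.
case: (eqVneq S T) => [<-|ST] /=; first by rewrite HS.
apply/idP/idP => [dT|HT].
  have := valP T; rewrite inE => /andP[/set0Pn[z zT] /existsP[g /eqP ET]].
  have zX : nbP I z (rep P) by move: zT; rewrite ET inE => /andP[].
  pose zz : XX P := exist _ z zX.
  have [U /andP[HU zU]] := F1 zz Pl.
  have zT' : J P zz T by [].
  have zS : ~~ J P zz S.
    by move/forallP: dT => /(_ zz); rewrite zT' andbT.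
  have dU : disj (J P) S U.
    apply/forallP => w; apply/negP => /andP[wS wU].
    have E := F1u HS HU wS wU; subst U.
    by rewrite zU in zS.
  have E : T = U := aff_par_uniq (Haff (rep P)) zS zT' zU dT dU.
  by rewrite E.
apply/forallP => w; apply/negP => /andP[wS wT].
by move/eqP: ST; apply; apply: (F1u HS HT wS wT).
Qed.

Lemma F3 P (S : YY P) : exists l, QI P l && (S \in pi P l).
Proof.
have := valP S; rewrite inE => /andP[/set0Pn[z zS] /existsP[g /eqP ES]].
exists (phiL g); apply/andP; split.
  by move: zS; rewrite ES rsP => /andP[zg /eqP <-]; apply: Hinc.
by rewrite inE; apply/existsP; exists g; rewrite eqxx ES eqxx.
Qed.

Definition q0 P : XX P := mkX (introT eqP (repE P)).
Lemma q0E P : val (q0 P) = rep P. Proof. by []. Qed.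

Lemma F4 P l l' : QI P l -> QI P l' -> pi P l = pi P l' -> l = l'.
Proof.
move=> Pl Pl' E.
have [S /andP[HS qS]] := F1 (q0 P) Pl.
have HS' : S \in pi P l' by rewrite -E.
have [q' /andP[qq q'S]] := aff_two (Haff (rep P)) qS.
move: HS HS' qS q'S => /piP[g [gl ES]] /piP[g' [g'l ES']].
rewrite /restr_inc => a b.
have a1 : I (val (q0 P)) g by rewrite -Jrs -ES.
have a2 : I (val (q0 P)) g' by rewrite -Jrs -ES'.
have b1 : I (val q') g by rewrite -Jrs -ES.
have b2 : I (val q') g' by rewrite -Jrs -ES'.
have ne : val q' != val (q0 P) by [].
rewrite -gl -g'l; exact: (nbL_phi ne b1 a1 b2 a2).
Qed.

Lemma C1 P (q : XX P) : #|[set S | J P q S]| = dg P.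
Proof.
symmetry; apply: (card_rel (R := fun l S => S \in pi P l)).
- by move=> l; rewrite inE => Pl; have [S /andP[a b]] := F1 q Pl; exists S; rewrite inE a b.
- by move=> S _; have [l /andP[a b]] := F3 S; exists l; rewrite inE a b.
- by move=> l S S' _ qS qS' HS HS'; move: qS qS'; rewrite !inE => qS qS'; apply: (F1u HS HS' qS qS').
- move=> l l' S Pl Pl' _ HS HS'; move: Pl Pl'; rewrite !inE => Pl Pl'.
  by apply: (F4 (P:=P)) => //; rewrite -(F2 Pl HS) (F2 Pl' HS').
Qed.

Lemma linesize P (S : YY P) : #|[set q | J P q S]|.+1 = dg P.
Proof.
have [u uS] := aff_off (Haff (rep P)) S.
by rewrite (aff_size (Haff (rep P)) uS) C1.
Qed.

Lemma d3 P : 3 <= dg P.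
Proof.
have [u [w [_ _ uw _]]] := aff_tri (Haff (rep P)) (q0 P).
have [S /andP[uS _]] := aff_join (Haff (rep P)) uw.
have [u' /andP[uu u'S]] := aff_two (Haff (rep P)) uS.
rewrite -(linesize S) ltnS; apply/card_gt1P; exists u, u'.
by rewrite !inE uS u'S eq_sym.
Qed.

Lemma meet2 P l l' (S T : YY P) : QI P l -> QI P l' -> l != l' ->
  S \in pi P l -> T \in pi P l' -> (S != T) /\ exists z, J P z S && J P z T.
Proof.
move=> Pl Pl' ll HS HT.
have ST : S != T.
  apply: contra ll => /eqP E; subst T.
  by apply/eqP/(F4 (P:=P)) => //; rewrite -(F2 Pl HS) (F2 Pl' HT).
split=> //.
case: (boolP [exists z, J P z S && J P z T]) => [/existsP//|/existsPn Hno]; exfalso.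
have : T \in par_class (J P) S.
  rewrite inE /parallel; apply/orP; right; apply/forallP => z; exact: Hno.
rewrite (F2 Pl HS) => HT'.
by move/eqP: ll; apply; apply: (F4 (P:=P)) => //; rewrite -(F2 Pl HT') (F2 Pl' HT).
Qed.

Lemma pisize P l : QI P l -> #|pi P l| = (dg P).-1.
Proof.
move=> Pl; have [l' /andP[ll Pl']] := Qline2 Pl.
rewrite eq_sym in ll.
have [T /andP[HT _]] := F1 (q0 P) Pl'.
rewrite -(linesize T) /=; symmetry.
apply: (card_rel (R := fun z S => J P z S)).
- move=> z; rewrite inE => zT; have [S /andP[a b]] := F1 z Pl; exists S; by rewrite a b.
- move=> S HS; have [_ [z /andP[a b]]] := meet2 Pl Pl' ll HS HT.
  by exists z; rewrite inE a b.
- by move=> z S S' _ HS HS' a b; apply: (F1u HS HS' a b).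
- move=> z z' S zT z'T HS zS z'S; move: zT z'T; rewrite !inE => zT z'T.
  case: (eqVneq z z') => // zz; exfalso.
  have [ST _] := meet2 Pl Pl' ll HS HT.
  by move/eqP: ST; apply; apply: (aff_uniq (Haff (rep P)) zz zS z'S zT z'T).
Qed.

Lemma Qline P : exists l, QI P l.
Proof.
case: HQ => _ [_ [a [b [c [d [Hu _]]]]]].
move: Hu; rewrite /= !inE !negb_or => /andP[/andP[ab _] _].
case: (eqVneq P a) => [->|Pa].
  by have [k /andP[a1 _]] := Qjoin ab; exists k.
by have [k /andP[a1 _]] := Qjoin Pa; exists k.
Qed.

Lemma Xsize P : #|{: XX P}| = (dg P).-1 ^ 2.
Proof.
have [l Pl] := Qline P.
have [l' /andP[ll Pl']] := Qline2 Pl.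
rewrite eq_sym in ll.
rewrite -cardsT expnS expn1 -{1}(pisize Pl) -(pisize Pl') -cardsX.
apply: (card_rel (R := fun z ST => J P z ST.1 && J P z ST.2)).
- move=> z _; have [S /andP[a b]] := F1 z Pl; have [T /andP[c d]] := F1 z Pl'.
  by exists (S, T); rewrite in_setX a b c d.
- move=> [S T]; rewrite in_setX /= => /andP[HS HT].
  have [_ [z zz]] := meet2 Pl Pl' ll HS HT; by exists z; rewrite inE.
- move=> z [S T] [S' T']; rewrite !in_setX /= => _ /andP[HS HT] /andP[HS' HT'] /andP[a b] /andP[c d].
  by rewrite (F1u HS HS' a c) (F1u HT HT' b d).
- move=> z z' [S T]; rewrite !in_setX /= => _ _ /andP[HS HT] /andP[a b] /andP[c d].
  case: (eqVneq z z') => // zz; exfalso.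
  have [ST _] := meet2 Pl Pl' ll HS HT.
  by move/eqP: ST; apply; apply: (aff_uniq (Haff (rep P)) zz a c b d).
Qed.

Lemma parsize P : #|par_classes (J P)| = dg P.
Proof.
symmetry; apply: (card_rel (R := fun l C => C == pi P l)).
- move=> l; rewrite inE => Pl; exists (pi P l); rewrite eqxx andbT.
  have [S /andP[HS _]] := F1 (q0 P) Pl.
  by rewrite -(F2 Pl HS); apply: imset_f.
- move=> C /imsetP[S _ ->]; have [l /andP[Pl HS]] := F3 S.
  by exists l; rewrite inE Pl (F2 Pl HS) eqxx.
- by move=> l C C' _ _ _ /eqP -> /eqP ->.
- by move=> l l' C; rewrite !inE => Pl Pl' _ /eqP -> /eqP E; apply: (F4 (P:=P)).
Qed.

Lemma dconst P Q : dg P = dg Q.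
Proof.
case: (eqVneq P Q) => [->//|PQ].
have [k /andP[Pk Qk]] := Qjoin PQ.
have [R Rk] := Qoff k.
have RP : R != P by apply: contra Rk => /eqP ->.
have RQ : R != Q by apply: contra Rk => /eqP ->.
have [k1 /andP[Rk1 Pk1]] := Qjoin RP.
have [k2 /andP[Rk2 Qk2]] := Qjoin RQ.
have [k3 k3in] : exists k3, k3 \in [set k | QI R k] :\ k1 :\ k2.
  apply/set0Pn; rewrite -card_gt0.
  have := d3 R; rewrite /dg.
  have := cardsD1 k1 [set k | QI R k]; have := cardsD1 k2 ([set k | QI R k] :\ k1).
  case: (k1 \in _); case: (k2 \in _) => /=; lia.
move: k3in; rewrite !inE => /andP[k32 /andP[k31 Rk3]].
have Pk3 : ~~ QI P k3.
  by apply: contra k31 => Pk3; apply/eqP; apply: (Quniq RP Rk3 Pk3 Rk1 Pk1).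
have Qk3 : ~~ QI Q k3.
  by apply: contra k32 => Qk3; apply/eqP; apply: (Quniq RQ Rk3 Qk3 Rk2 Qk2).
by rewrite -(QsizeA Pk3) (QsizeA Qk3).
Qed.

Lemma exY P : exists S : YY P, true.
Proof. have [l Pl] := Qline P; by have [S _] := F1 (q0 P) Pl; exists S. Qed.
Definition dflt P : YY P := xchoose (exY P).

Lemma pi_par P l : QI P l -> pi P l \in par_classes (J P).
Proof.
move=> Pl; have [S /andP[HS _]] := F1 (q0 P) Pl.
by rewrite -(F2 Pl HS); apply: imset_f.
Qed.

Lemma par_pi P C : C \in par_classes (J P) -> exists l, QI P l /\ pi P l = C.
Proof.
move=> /imsetP[S _ ->]; have [l /andP[Pl HS]] := F3 S.
by exists l; rewrite (F2 Pl HS).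
Qed.

Section Cons.
Variable k : nat.
Hypothesis Hm : forall P, dg P = k.+3.

Definition beta P l (i : 'I_k.+2) : YY P := nth (dflt P) (enum (pi P l)) i.

Lemma pisz P l : QI P l -> size (enum (pi P l)) = k.+2.
Proof. by move=> Pl; rewrite -cardE pisize // Hm. Qed.

Lemma beta_in P l i : QI P l -> beta P l i \in pi P l.
Proof. by move=> Pl; rewrite -mem_enum; apply: mem_nth; rewrite pisz. Qed.

Lemma beta_inj P l : QI P l -> injective (beta P l).
Proof.
move=> Pl i j /eqP; rewrite /beta nth_uniq ?pisz ?enum_uniq //.
by move=> /eqP; apply: ord_inj.
Qed.

Lemma beta_surj P l h : QI P l -> h \in pi P l -> exists i, beta P l i = h.
Proof.
move=> Pl Hh.
have hi : index h (enum (pi P l)) < k.+2 by rewrite -(pisz Pl) index_mem mem_enum.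
by exists (Ordinal hi); rewrite /beta /= nth_index // mem_enum.
Qed.

Definition Ofun l (r : {g : Ln | phiL g == l}) P : 'I_k.+2 :=
  odflt ord0 [pick i | val (beta P l i) == rs P (val r)].

Lemma betaO P l (r : {g : Ln | phiL g == l}) : QI P l -> val (beta P l (Ofun r P)) = rs P (val r).
Proof.
move=> Pl.
have Pr : QI P (phiL (val r)) by rewrite (eqP (valP r)).
have [p /andP[pr pP]] := L4 Pr.
have HS : mkY pr pP \in pi P l.
  by rewrite inE; apply/existsP; exists (val r); rewrite (valP r) eqxx.
have [i Ei] := beta_surj Pl HS.
rewrite /Ofun; case: pickP => [j /eqP //|H].
by move: (H i); rewrite Ei eqxx.
Qed.

Lemma rowinj l P Q (g g' : Ln) : phiL g = l -> phiL g' = l -> P != Q -> QI P l -> QI Q l ->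
  rs P g = rs P g' -> rs Q g = rs Q g' -> g = g'.
Proof.
move=> gl g'l PQ Pl Ql E1 E2.
have [z /andP[zg zP]] : exists z, I z g && (phiP z == P) by apply: L4; rewrite gl.
have [w /andP[wg wQ]] : exists w, I w g && (phiP w == Q) by apply: L4; rewrite gl.
have : z \in rs P g by rewrite rsP zg zP.
rewrite E1 rsP => /andP[zg' _].
have : w \in rs Q g by rewrite rsP wg wQ.
rewrite E2 rsP => /andP[wg' _].
by apply: (L2 (p:=z) (q:=w)) => //; rewrite (eqP zP) (eqP wQ).
Qed.

Lemma rowcard l P Q : QI P l -> QI Q l -> P != Q ->
  #|[set g | phiL g == l]| = #|setX (pi P l) (pi Q l)|.
Proof.
move=> Pl Ql PQ.
apply: (card_rel (R := fun g ST => (val ST.1 == rs P g) && (val ST.2 == rs Q g))).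
- move=> g; rewrite inE => /eqP gl.
  have [z /andP[zg zP]] : exists z, I z g && (phiP z == P) by apply: L4; rewrite gl.
  have [w /andP[wg wQ]] : exists w, I w g && (phiP w == Q) by apply: L4; rewrite gl.
  exists (mkY zg zP, mkY wg wQ); rewrite in_setX /= !eqxx !andbT.
  by apply/andP; split; rewrite inE; apply/existsP; exists g; rewrite gl !eqxx.
- move=> [S T]; rewrite in_setX /= => /andP[HS HT].
  have := valP S; rewrite inE => /andP[/set0Pn[z zS] _].
  have := valP T; rewrite inE => /andP[/set0Pn[w wT] _].
  have zP : phiP z == P by move: zS; have [g0 [_ ->]] := piP HS; rewrite rsP => /andP[].
  have wQ : phiP w == Q by move: wT; have [g0 [_ ->]] := piP HT; rewrite rsP => /andP[].
  have [g /andP[zg wg]] := Hjoin z w.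
  have gl : phiL g = l.
    have a := Hinc zg; have b := Hinc wg; rewrite (eqP zP) in a; rewrite (eqP wQ) in b.
    exact: (Quniq PQ a b Pl Ql).
  exists g; rewrite inE gl eqxx /=.
  have HS' : mkY zg zP \in pi P l.
    by rewrite inE; apply/existsP; exists g; rewrite gl !eqxx.
  have HT' : mkY wg wQ \in pi Q l.
    by rewrite inE; apply/existsP; exists g; rewrite gl !eqxx.
  have E1 : S = mkY zg zP by apply: (F1u (q := mkX zP) HS HS' zS); rewrite /restr_inc /= rsP zg zP.
  have E2 : T = mkY wg wQ by apply: (F1u (q := mkX wQ) HT HT' wT); rewrite /restr_inc /= rsP wg wQ.
  by rewrite E1 E2 /= !eqxx.
- move=> g [S T] [S' T']; rewrite !in_setX /= => _ _ _ /andP[/eqP a /eqP b] /andP[/eqP c /eqP d].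
  have E1 : S = S' by apply: val_inj; exact: (etrans a (esym c)).
  have E2 : T = T' by apply: val_inj; exact: (etrans b (esym d)).
  by rewrite E1 E2.
- move=> g g' [S T]; rewrite !inE /= => /eqP gl /eqP g'l _ /andP[/eqP a /eqP b] /andP[/eqP c /eqP d].
  by apply: (rowinj gl g'l PQ Pl Ql); rewrite -?a -?b -?c -?d.
Qed.

Lemma OA l P Q : QI P l -> QI Q l -> P != Q ->
  bijective (fun r : {g : Ln | phiL g == l} => (Ofun r P, Ofun r Q)).
Proof.
move=> Pl Ql PQ; apply: inj_card_bij.
  move=> r r' [E1 E2]; apply: val_inj.
  apply: (rowinj (eqP (valP r)) (eqP (valP r')) PQ Pl Ql).
    by rewrite -!betaO // E1.
  by rewrite -!betaO // E2.
rewrite card_prod card_ord card_sig.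
have -> : #|[pred x | phiL x == l]| = #|[set g | phiL g == l]| by rewrite cardsE.
by rewrite (rowcard Pl Ql PQ) cardsX !pisize // !Hm.
Qed.

End Cons.


Lemma main_sec :
  exists (m : nat) (Ppt Pln : finType) (PI : Ppt -> Pln -> bool)
         (APt ALn : Ppt -> finType) (AI : forall P, APt P -> ALn P -> bool)
         (Sym Row : Pln -> finType) (O : forall l, Row l -> Ppt -> Sym l)
         (pi : forall P : Ppt, Pln -> {set ALn P})
         (beta : forall (P : Ppt) (l : Pln), Sym l -> ALn P),
    2 <= m /\
    proj_plane_order PI m /\
    (forall P, affine_plane_order (AI P) m) /\
    (forall l, OA_on PI m l (O l)) /\
    admissible_pi PI AI pi /\
    admissible_beta PI pi beta /\
    inc_iso I (construction_inc PI AI O beta).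
Proof.
have [P0 _] : exists P0 : Qpt, true.
  by case: HQ => _ [_ [a _]]; exists a.
have [k Hk] : exists k, dg P0 = k.+3 by have := d3 P0; exists (dg P0 - 3); lia.
have Hm : forall P, dg P = k.+3 by move=> P; rewrite (dconst P P0).
exists k.+2, Qpt, Qln, QI,
  (fun P : Qpt => ({q : Pt | nbP I q (rep P)} : finType)),
  (fun P : Qpt => ({S : {set Pt} | S \in restr_lines I (rep P)} : finType)),
  (fun P : Qpt => @restr_inc Pt Ln I (rep P)),
  (fun _ => ('I_k.+2 : finType)),
  (fun l => ({g : Ln | phiL g == l} : finType)),
  (fun l r P => Ofun k r P), pi, (@beta k).
split; first by [].
split.
  split; first exact: HQ.
  split; last by move=> p; exact: Hm.
  by move=> g; have [R Rg] := Qoff g; rewrite (QsizeA Rg) Hm.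
split.
  move=> P; split; first exact: Haff.
  split; first by rewrite Xsize Hm.
  split; last by rewrite parsize Hm.
  by move=> S; apply/eqP; rewrite -eqSS linesize Hm.
split.
  move=> l; split; first by rewrite card_ord.
  by move=> P Q Pl Ql PQ; exact: (OA Hm Pl Ql PQ).
split.
  move=> P; split; first by move=> l; apply: pi_par.
  split; first by move=> l l' Pl Pl' E; apply: (F4 (P:=P)).
  by move=> C /par_pi.
split.
  move=> P l Pl; split; first by move=> s; apply: (beta_in Hm).
  split; first exact: (beta_inj Hm).
  by move=> h; apply: (beta_surj Hm).
pose f (p : Pt) : {P : Qpt & {q : Pt | nbP I q (rep P)}} :=
  existT _ (phiP p) (mkX (eqxx (phiP p))).
pose g (h : Ln) : {l : Qln & {g : Ln | phiL g == l}} :=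
  existT _ (phiL h) (exist _ h (eqxx (phiL h))).
exists f, g; split.
  exists (fun x : {P : Qpt & {q : Pt | nbP I q (rep P)}} => proj1_sig (projT2 x)); first by [].
  case=> P [q hq] /=.
  have e : phiP q = P by move: hq; rewrite inX => /eqP.
  subst P; rewrite /f; congr existT; exact: val_inj.
split.
  exists (fun x : {l : Qln & {g : Ln | phiL g == l}} => proj1_sig (projT2 x)); first by [].
  case=> l [h hh] /=.
  have e := eqP hh; subst l; rewrite /g; congr existT; exact: val_inj.
move=> p h; rewrite /construction_inc /=.
case Ph: (QI (phiP p) (phiL h)) => /=.
  by rewrite /restr_inc /= (betaO Hm) // rsP eqxx andbT.
by apply/esym/negP => /Hinc; rewrite Ph.
Qed.

End PH.

Theorem mainTheorem2 (Pt Ln : finType) (I : Pt -> Ln -> bool) :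
  two_uniform_PH I ->
  exists (m : nat) (Ppt Pln : finType) (PI : Ppt -> Pln -> bool)
         (APt ALn : Ppt -> finType) (AI : forall P, APt P -> ALn P -> bool)
         (Sym Row : Pln -> finType) (O : forall l, Row l -> Ppt -> Sym l)
         (pi : forall P : Ppt, Pln -> {set ALn P})
         (beta : forall (P : Ppt) (l : Pln), Sym l -> ALn P),
    2 <= m /\
    proj_plane_order PI m /\
    (forall P, affine_plane_order (AI P) m) /\
    (forall l, OA_on PI m l (O l)) /\
    admissible_pi PI AI pi /\
    admissible_beta PI pi beta /\
    inc_iso I (construction_inc PI AI O beta).
Proof.
case=> [[Hjoin [Hmeet [Qpt [Qln [QI [phiP [phiL [HQ [HsP [HsL [Hinc [HnP HnL]]]]]]]]]]]] Hunif].
have Haff : forall P, affine_plane (@restr_inc Pt Ln I P) by move=> P; case: (Hunif P).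
exact: (main_sec Hjoin Hmeet HQ HsP HsL Hinc HnP HnL Haff).
Qed.
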